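(* Let $X$ be a real Banach space, $K\subset X$ compact, $\lambda_1,\dots,\lambda_m\in X^*$ with $\|\lambda_j\|_{X^*}=1$, and $w\in\mathbb{R}^m$. Let $\varepsilon>0$ and let $g_\varepsilon\in X$ satisfy $$\|\lambda(g_\varepsilon)-w\|\le\varepsilon\quad\text{and}\quad \operatorname{dist}(g_\varepsilon,K)_X\le\varepsilon .$$ Then $$\|f-g_\varepsilon\|_X\le \varepsilon+2R(K(w,2\varepsilon))_X\qquad\text{for all } f\in K_w .$$ Moreover, if $R(K_w)_X\neq 0$, then for every $C>2$ there is $\varepsilon_0>0$ such that whenever $0<\varepsilon\le\varepsilon_0$ and $g_\varepsilon$ satisfies the two conditions above, $\|f-g_\varepsilon\|_X\le C\,R(K_w)_X$ for all $f\in K_w$.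
   Context: For $g\in X$, $\lambda(g):=(\lambda_1(g),\dots,\lambda_m(g))\in\mathbb{R}^m$; on $\mathbb{R}^m$ use $\|v\|:=\big[\frac1m\sum_{j=1}^m|v_j|^2\big]^{1/2}$. $\operatorname{dist}(g,K)_X:=\inf_{h\in K}\|g-h\|_X$. $K_w:=\{f\in K:\lambda(f)=w\}$ and $K(w,\varepsilon):=\bigcup_{\|w'-w\|\le\varepsilon}K_{w'}$ ($w'\in\mathbb{R}^m$). For $S\subset X$, $R(S)_X:=\inf\{r:\ S\subset B(z,r)_X\text{ for some }z\in X\}$ is the Chebyshev radius, $B(z,r)_X$ the ball of center $z$ and radius $r$. *)

(* Defs.v *)
From HB Require Import structures.
From mathcomp Require Import all_boot all_order all_algebra.
From mathcomp Require Import all_classical all_reals all_analysis.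
Set Implicit Arguments. Unset Strict Implicit. Unset Printing Implicit Defensive.
Import Order.TTheory GRing.Theory Num.Theory.
Import numFieldNormedType.Exports.
Local Open Scope classical_set_scope.
Local Open Scope ring_scope.

Definition is_linear_functional (R : realType) (X : normedModType R)
  (l : X -> R) : Prop :=
  forall (a : R) (x y : X), l (a *: x + y) = a * l x + l y.

Definition dual_norm (R : realType) (X : normedModType R) (l : X -> R) : R :=
  sup [set `|l x| | x in [set x : X | `|x| <= 1]].

Definition vnorm (R : realType) (m : nat) (v : 'I_m -> R) : R :=
  Num.sqrt ((m%:R)^-1 * \sum_(j < m) `|v j| ^+ 2).

Definition lamvec (R : realType) (X : normedModType R) (m : nat)
  (lam : 'I_m -> X -> R) (g : X) : 'I_m -> R := fun j => lam j g.

Definition distX (R : realType) (X : normedModType R) (g : X) (K : set X) : R :=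
  inf [set `|g - h| | h in K].

Definition Kfib (R : realType) (X : normedModType R) (m : nat)
  (lam : 'I_m -> X -> R) (K : set X) (w : 'I_m -> R) : set X :=
  [set f | K f /\ lamvec lam f = w].

Definition Knbhd (R : realType) (X : normedModType R) (m : nat)
  (lam : 'I_m -> X -> R) (K : set X) (w : 'I_m -> R) (eps : R) : set X :=
  [set f | exists w' : 'I_m -> R,
     vnorm (fun j => w' j - w j) <= eps /\ Kfib lam K w' f].

Definition cheb_radius (R : realType) (X : normedModType R) (S : set X) : R :=
  inf [set r : R | 0 <= r /\ exists z : X, forall x, S x -> `|x - z| <= r].

(* Main.v *)
Require Import Defs.
From HB Require Import structures.
From mathcomp Require Import all_boot all_order all_algebra.
From mathcomp Require Import all_classical all_reals all_analysis.
From mathcomp Require Import ring lra.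
Import Order.TTheory GRing.Theory Num.Theory.
Import numFieldNormedType.Exports.
Local Open Scope classical_set_scope.
Local Open Scope ring_scope.

Section H.
Context {R : realType} {X : completeNormedModType R}.

Lemma lin0 (l : X -> R) : is_linear_functional l -> l 0 = 0.
Proof.
move=> L; have := L 1 0 0; rewrite scale1r addr0 mul1r => H; lra.
Qed.

Lemma linB (l : X -> R) : is_linear_functional l -> forall x y, l (x - y) = l x - l y.
Proof.
move=> L x y; have := L (-1) y x; rewrite scaleN1r addrC => ->; ring.
Qed.

Lemma linZ (l : X -> R) : is_linear_functional l -> forall a x, l (a *: x) = a * l x.
Proof.
move=> L a x; have := L a x 0; by rewrite addr0 lin0 // addr0.
Qed.

Lemma lin_bound (l : X -> R) : is_linear_functional l -> dual_norm l = 1 ->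
  forall x, `|l x| <= `|x|.
Proof.
move=> L D x.
set E := [set `|l x| | x in [set x : X | `|x| <= 1]].
have hs : has_sup E.
  apply/not_notP => hn; move: D; rewrite /dual_norm -/E sup_out //.
  by move/eqP; rewrite eq_sym oner_eq0.
have [->|x0] := eqVneq x 0; first by rewrite lin0 // normr0.
have nx : 0 < `|x| by rewrite normr_gt0.
have H : `|x|^-1 * `|l x| <= 1.
  rewrite -D; apply: sup_upper_bound => //.
  exists (`|x|^-1 *: x) => /=.
    by rewrite normrZ normrV ?unitfE ?gt_eqF // normr_id mulVf ?gt_eqF.
  by rewrite linZ // normrM normrV ?unitfE ?gt_eqF // normr_id.
by move: H; rewrite ler_pdivrMl // mulr1.
Qed.

Lemma cheb_ne (K S : set X) : compact K -> S `<=` K ->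
  [set r : R | 0 <= r /\ exists z : X, forall x, S x -> `|x - z| <= r] !=set0.
Proof.
move=> cK SK.
have /ex_strict_bound_gt0 [M M0 HM] := compact_bounded cK.
exists M; split; first exact: ltW.
by exists 0 => x Sx; rewrite subr0; apply: ltW; apply: HM; apply: SK.
Qed.

Lemma cheb_ge0 (K S : set X) : compact K -> S `<=` K -> 0 <= cheb_radius S.
Proof.
move=> cK SK; apply: lb_le_inf; first exact: cheb_ne cK SK.
by move=> r [].
Qed.

Lemma cheb_diam (K S : set X) : compact K -> S `<=` K -> forall x y, S x -> S y ->
  `|x - y| <= 2 * cheb_radius S.
Proof.
move=> cK SK x y Sx Sy.
suff : `|x - y| / 2 <= cheb_radius S by rewrite ler_pdivrMr // mulrC.
apply: lb_le_inf; first exact: cheb_ne cK SK.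
move=> r [r0 [z Hz]].
rewrite ler_pdivrMr //.
have -> : x - y = (x - z) + (z - y) by rewrite addrA subrK.
apply: (le_trans (ler_normD _ _)).
rewrite [`|z - y|]distrC; have := Hz _ Sx; have := Hz _ Sy; lra.
Qed.

Lemma dist_attained (K : set X) (f g : X) (eps : R) : compact K -> K f ->
  distX g K <= eps -> exists2 h, K h & `|g - h| <= eps.
Proof.
move=> cK Kf D.
have cont : continuous (fun h : X => `|g - h|).
  by move=> x; apply: cvg_norm; apply: cvgB; [exact: cvg_cst | exact: cvg_id].
have [c cK' Hc] := @compact_EVT_min X R (fun h => `|g - h|) K
  (ex_intro _ f Kf) cK (continuous_subspaceT cont).
exists c; first by move: cK'; rewrite inE.
apply: le_trans D; apply: lb_le_inf; first by exists `|g - f|, f.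
by move=> _ [h Kh <-]; apply: Hc; rewrite inE.
Qed.

Lemma vnorm_sq m (v : 'I_m -> R) eps : 0 <= eps -> vnorm v <= eps ->
  \sum_(j < m) `|v j|^+2 <= m%:R * eps^+2.
Proof.
move=> e0; rewrite /vnorm; case: m v => [|m] v.
  by rewrite big_ord0 mul0r.
set T := \sum_(j < _) _.
have T0 : 0 <= T by apply: sumr_ge0 => j _; apply: exprn_ge0.
have m0 : 0 < (m.+1)%:R :> R by rewrite ltr0n.
have a0 : 0 <= (m.+1)%:R^-1 * T by rewrite mulr_ge0 // invr_ge0 ltW.
move=> H.
have H2 : (m.+1)%:R^-1 * T <= eps ^+ 2.
  rewrite -(sqr_sqrtr a0); have := sqrtr_ge0 ((m.+1)%:R^-1 * T).
  move: H; set s := Num.sqrt _ => H Hs; nra.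
by move: H2; rewrite ler_pdivrMl.
Qed.

Lemma vnorm_le m (v : 'I_m -> R) eps : 0 <= eps ->
  \sum_(j < m) `|v j|^+2 <= m%:R * eps^+2 -> vnorm v <= eps.
Proof.
move=> e0; rewrite /vnorm; case: m v => [|m] v.
  by rewrite big_ord0 mulr0 sqrtr0.
set T := \sum_(j < _) _ => H.
have m0 : 0 < (m.+1)%:R :> R by rewrite ltr0n.
rewrite -(ger0_norm e0) -sqrtr_sqr ler_sqrt ?exprn_ge0 //.
by rewrite ler_pdivrMl.
Qed.

Lemma sum_shift m (a b : 'I_m -> R) eps : (forall j, `|a j| <= eps) ->
  \sum_(j < m) `|b j|^+2 <= m%:R * eps^+2 ->
  \sum_(j < m) `|a j + b j|^+2 <= m%:R * (2 * eps)^+2.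
Proof.
move=> Ha Hb.
have Ht : forall j, `|a j + b j|^+2 <= 2 * eps^+2 + 2 * `|b j|^+2.
  move=> j; have h1 := ler_normD (a j) (b j); have h2 := Ha j.
  have h3 := normr_ge0 (a j); have h4 := normr_ge0 (b j); have h5 := normr_ge0 (a j + b j).
  move: h1 h2 h3 h4 h5.
  set x := `|a j|; set y := `|b j|; set z := `|a j + b j| => h1 h2 h3 h4 h5.
  have e1 : z ^+ 2 <= (x + y) ^+ 2 by rewrite lerXn2r // ?nnegrE; lra.
  have e2 : x ^+ 2 <= eps ^+ 2 by rewrite lerXn2r // ?nnegrE; lra.
  have e3 : 0 <= (x - y) ^+ 2 by exact: sqr_ge0.
  move: e1 e2 e3; rewrite !expr2; nra.
apply: le_trans (ler_sum _ (fun j _ => Ht j)) _.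
rewrite big_split /= -[X in _ + X <= _]mulr_sumr.
rewrite sumr_const card_ord -mulr_natl.
rewrite exprMn.
move: Hb; set T := \sum_(j < m) _; set E := eps ^+ 2; set M := m%:R.
rewrite !mulr1 -mulr_natl -/M !expr2 => H; nra.
Qed.

Lemma approx_fib (K : set X) m (lam : 'I_m -> X -> R) (w : 'I_m -> R) (d : R) :
  compact K -> (forall j, continuous (lam j)) -> 0 < d ->
  exists2 eta, 0 < eta & forall h, K h -> \sum_(j < m) `|lam j h - w j|^+2 < eta ->
    exists2 h', Kfib lam K w h' & `|h - h'| < d.
Proof.
move=> cK cl d0.
pose phi := fun h => \sum_(j < m) `|lam j h - w j|^+2.
have cphi : continuous phi.
  rewrite /phi; apply: continuous_big; first exact: add_continuous.
  move=> j _.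
  have c1 : continuous (fun h => `|lam j h - w j|).
    by move=> y; apply: cvg_norm; apply: cvgB; [exact: cl | exact: cvg_cst].
  move=> x; exact: (cvgM (c1 x) (c1 x)).
pose B := \bigcup_(h' in Kfib lam K w) ball h' d.
pose A := K `&` ~` B.
have cA : compact A.
  apply: (subclosed_compact _ cK); last by move=> x [].
  apply: closedI; first exact: (compact_closed (@norm_hausdorff _ X) cK).
  apply: open_closedC; apply: bigcup_open => i _; exact: ball_open.
have HB : forall h, ~ A h -> K h -> exists2 h', Kfib lam K w h' & `|h - h'| < d.
  move=> h nA Kh.
  have : B h by apply: contrapT => nB; apply: nA.
  case=> h' Kh' bh; exists h' => //.
  by move: bh; rewrite -ball_normE /ball_ /= distrC.
have [[a Aa]|nA] := pselect (exists a, A a); last first.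
  by exists 1 => // h Kh _; apply: HB => // Ah; apply: nA; exists h.
have [c Ac Hc] := @compact_EVT_min X R phi A (ex_intro _ a Aa) cA
  (continuous_subspaceT cphi).
move: Ac; rewrite inE => Ac.
exists (phi c).
  rewrite lt_def sumr_ge0 ?andbT; last by move=> j _; apply: exprn_ge0.
  apply/negP => /eqP E; have {}E : phi c = 0 by [].
  have P := psumr_eq0P (fun i _ => sqr_ge0 `|lam i c - w i|) E.
  have Kc : Kfib lam K w c.
    split; first by case: Ac.
    apply/funext => j; rewrite /lamvec; apply/eqP; rewrite -subr_eq0 -normr_eq0.
    by rewrite -sqrf_eq0; apply/eqP; apply: P.
  by case: Ac => _; apply; exists c => //; apply: ballxx.
move=> h Kh ph; apply: HB => // Ah.
by have := Hc h; rewrite inE => /(_ Ah); rewrite leNgt ph.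
Qed.
End H.
Arguments vnorm_sq {R m v eps}.
Arguments vnorm_le {R m v eps}.
Arguments dist_attained {R X K f} g {eps}.
Arguments cheb_diam {R X K S}.
Arguments cheb_ge0 {R X K S}.
Arguments approx_fib {R X K m lam} w {d}.
Arguments sum_shift {R m a b eps}.
Theorem theorem2p3 (R : realType) (X : completeNormedModType R)
  (K : set X) (m : nat) (lam : 'I_m -> X -> R) (w : 'I_m -> R) :
  compact K ->
  (forall j, is_linear_functional (lam j)) ->
  (forall j, continuous (lam j)) ->
  (forall j, dual_norm (lam j) = 1) ->
  (forall (eps : R) (g : X), 0 < eps ->
     vnorm (fun j => lamvec lam g j - w j) <= eps ->
     distX g K <= eps ->
     forall f, Kfib lam K w f ->
       `|f - g| <= eps + 2 * cheb_radius (Knbhd lam K w (2 * eps)))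
  /\
  (cheb_radius (Kfib lam K w) != 0 ->
   forall C : R, 2 < C ->
   exists2 eps0 : R, 0 < eps0 &
     forall (eps : R) (g : X), 0 < eps -> eps <= eps0 ->
       vnorm (fun j => lamvec lam g j - w j) <= eps ->
       distX g K <= eps ->
       forall f, Kfib lam K w f ->
         `|f - g| <= C * cheb_radius (Kfib lam K w)).
Proof.
move=> cK Lin Cont Dn.
have lb : forall j x y, `|lam j x - lam j y| <= `|x - y|.
  by move=> j x y; rewrite -linB //; apply: lin_bound.
have key : forall eps g h, 0 < eps -> vnorm (fun j => lamvec lam g j - w j) <= eps ->
    `|g - h| <= eps ->
    \sum_(j < m) `|lam j h - w j|^+2 <= m%:R * (2 * eps)^+2.
  move=> eps g h e0 Hv Hgh.
  have Hs := vnorm_sq (ltW e0) Hv.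
  have -> : \sum_(j < m) `|lam j h - w j|^+2 =
      \sum_(j < m) `|(lam j h - lam j g) + (lamvec lam g j - w j)|^+2.
    by apply: eq_bigr => j _; rewrite /lamvec addrA subrK.
  apply: sum_shift Hs => j.
  by apply: le_trans (lb _ _ _) _; rewrite distrC.
have KwK : Kfib lam K w `<=` K by move=> x [].
have KnK : forall e, Knbhd lam K w e `<=` K by move=> e x [w' [_ []]].
split.
- move=> eps g e0 Hv Hd f Kf.
  have [h Kh Hgh] := dist_attained g cK (proj1 Kf) Hd.
  have e20 : 0 <= 2 * eps by rewrite mulr_ge0 // ltW.
  have Hh : Knbhd lam K w (2 * eps) h.
    exists (lamvec lam h); split; last by [].
    by apply: vnorm_le => //; apply: (key eps g h).
  have Hf : Knbhd lam K w (2 * eps) f.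
    exists w; split; last by [].
    apply: vnorm_le => //; rewrite big1; first by rewrite mulr_ge0 ?sqr_ge0.
    by move=> j _; rewrite subrr normr0 expr0n.
  have := cheb_diam cK (KnK _) _ _ Hf Hh.
  have := ler_distD h f g; rewrite distrC in Hgh; lra.
- move=> Rn C C2.
  set rho := cheb_radius (Kfib lam K w) in Rn *.
  have r0 : 0 < rho by rewrite lt_def Rn (cheb_ge0 cK KwK).
  set d := (C - 2) * rho / 2.
  have d0 : 0 < d by rewrite divr_gt0 // mulr_gt0 // subr_gt0.
  have dE : 2 * d = (C - 2) * rho by rewrite /d; field.
  have [eta eta0 Heta] := approx_fib w cK Cont d0.
  set k : R := 4 * m%:R + 1.
  have k0 : 0 < k by rewrite /k; have : (0:R) <= m%:R by []; lra.
  exists (Num.min d (Num.min 1 (eta / k))).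
    by rewrite !lt_min d0 ltr01 divr_gt0.
  move=> eps g e0; rewrite !le_min => /and3P [ed e1 ek] Hv Hd f Kf.
  have [h Kh Hgh] := dist_attained g cK (proj1 Kf) Hd.
  have S := key eps g h e0 Hv Hgh.
  have Slt : \sum_(j < m) `|lam j h - w j|^+2 < eta.
    apply: le_lt_trans S _.
    move: ek; rewrite ler_pdivlMr // => ek.
    have m0 : (0:R) <= m%:R by [].
    move: ek; rewrite /k => ek; rewrite expr2; nra.
  have [h' Kh' Hhh'] := Heta h Kh Slt.
  have := cheb_diam cK KwK _ _ Kf Kh'.
  have := ler_distD h' f g; have := ler_distD h h' g.
  rewrite distrC in Hgh; rewrite distrC in Hhh'. nra.
Qed.
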